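(* Let $n\in\mathbb{N}$ and for $t\geq 1$ let $$f_n(t)=\sum_{j=0}^{n-1}\binom{n-1}{j}\left(\binom{n}{j+1}t^{2j+1}-\binom{n}{j}t^{2j}\right).$$ Then $f_n^{(i)}(t)\geq 0$ for all $t\geq 1$ and all $i=0,1,\dots,2n-1$.
   Context: $f_n^{(i)}$ denotes the $i$-th derivative of the polynomial $f_n$ (with $f_n^{(0)}=f_n$). *)

(* Defs.v *)
From mathcomp Require Import all_boot all_order all_algebra.
Set Implicit Arguments. Unset Strict Implicit. Unset Printing Implicit Defensive.
Import Order.TTheory GRing.Theory Num.Theory.
Local Open Scope ring_scope.

Definition fpoly (R : nzRingType) (n : nat) : {poly R} :=
  \sum_(j < n) ('C(n.-1, j))%:R *:
     (('C(n, j.+1))%:R *: 'X^((2 * j).+1)%N - ('C(n, j))%:R *: 'X^((2 * j)%N)).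

(* Main.v *)
Require Import Defs.
From mathcomp Require Import all_boot all_order all_algebra.
From mathcomp Require Import ring zify.
Import Order.TTheory GRing.Theory Num.Theory.
Local Open Scope ring_scope.

Lemma coef_lin_exp (S : comNzRingType) (a b : S) N l :
  ((a%:P + b%:P * 'X) ^+ N)`_l = a ^+ (N - l) * b ^+ l *+ 'C(N, l).
Proof.
rewrite exprDn coef_sum.
under eq_bigr => i _ do rewrite coefMn exprMn -!polyC_exp mulrA -polyCM coefCM coefXn.
case: (ltnP l N.+1) => hl.
  rewrite (bigD1 (Ordinal hl)) //= eqxx mulr1 big1 ?addr0 // => i hi.
  have -> : (l == i) = false.
    apply/negbTE; apply: contra hi => /eqP hli; apply/eqP/val_inj => /=.
    by rewrite hli.
  by rewrite mulr0 mul0rn.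
rewrite bin_small // mulr0n big1 // => i _.
have -> : (l == i) = false by apply/negbTE; rewrite neq_ltn (leq_trans (ltn_ord i) hl) orbT.
by rewrite mulr0 mul0rn.
Qed.

Section Pos.
Variable R : realFieldType.
Implicit Types p q : {poly R}.

Definition nnc p : Prop := forall i, 0 <= p`_i.

Lemma nnc_add p q : nnc p -> nnc q -> nnc (p + q).
Proof. by move=> hp hq i; rewrite coefD addr_ge0. Qed.

Lemma nnc_mul p q : nnc p -> nnc q -> nnc (p * q).
Proof. by move=> hp hq i; rewrite coefM sumr_ge0 // => j _; rewrite mulr_ge0. Qed.

Lemma nnc_X : nnc 'X.
Proof. by move=> i; rewrite coefX; case: (i == 1)%N. Qed.

Lemma nnc_1 : nnc 1.
Proof. by move=> i; rewrite coef1; case: (i == 0)%N. Qed.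

Lemma nnc_exp p k : nnc p -> nnc (p ^+ k).
Proof. by move=> hp; elim: k => [|k IH]; [rewrite expr0; apply: nnc_1 | rewrite exprS; apply: nnc_mul]. Qed.

Lemma nnc_scale c p : 0 <= c -> nnc p -> nnc (c *: p).
Proof. by move=> hc hp i; rewrite coefZ mulr_ge0. Qed.

Lemma nnc_sum k (F : 'I_k -> {poly R}) : (forall j, nnc (F j)) -> nnc (\sum_(j < k) F j).
Proof. by move=> hF i; rewrite coef_sum sumr_ge0 // => j _; apply: hF. Qed.

Lemma nnc_derivn p k : nnc p -> nnc (p^`(k)).
Proof. by move=> hp i; rewrite coef_derivn mulrn_wge0. Qed.

Lemma nnc_horner p x : 0 <= x -> nnc p -> 0 <= p.[x].
Proof. by move=> hx hp; rewrite horner_coef sumr_ge0 // => i _; rewrite mulr_ge0 ?exprn_ge0. Qed.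

Lemma derivn_compXsub1 p k : (p \Po ('X - 1))^`(k) = p^`(k) \Po ('X - 1).
Proof.
elim: k => [|k IH]; first by rewrite !derivn0.
by rewrite !derivnS IH deriv_comp derivB derivX derivC subr0 mulr1.
Qed.

End Pos.
Arguments nnc {R}.

Definition catR (R : nzRingType) k : R := ('C(k.*2, k))%:R - ('C(k.*2, k.+1))%:R.
Definition gsum (R : comNzRingType) m (s t : {poly R}) : {poly R} :=
  \sum_(k < m.+1) ('C(m,k)%:R * catR R k) *: ((s ^+ 2) ^+ (m - k) * t ^+ k).

Arguments gsum {R}.

Lemma catR_ge0 (R : realFieldType) k : 0 <= catR R k.
Proof.
rewrite /catR subr_ge0 ler_nat.
have h := mul_bin_left k.*2 k.
rewrite -addnn addnK in h.
by rewrite -(@leq_pmul2l k.+1) // -addnn h leq_mul2r leqnSn orbT.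
Qed.

Lemma h1 (R : realFieldType) m :
  let t : {poly R} := 'X in
  let A : {poly {poly R}} := 1%:P + (-t)%:P * 'X in
  let B : {poly {poly R}} := (-t)%:P + 1%:P * 'X in
  let Q := A ^+ m * B ^+ m.+1 in
  Q`_m + Q`_m.+1 = - fpoly R m.+1.
Proof.
move=> t A B Q.
have hA l : (A ^+ m)`_l = 1 ^+ (m - l) * (-t) ^+ l *+ 'C(m, l) by apply: coef_lin_exp.
have hB l : (B ^+ m.+1)`_l = (-t) ^+ (m.+1 - l) * 1 ^+ l *+ 'C(m.+1, l) by apply: coef_lin_exp.
rewrite /Q !coefM [X in _ + X]big_ord_recr /= hA bin_small // mulr0n mul0r addr0.
rewrite /fpoly -sumrN -big_split /=; apply: eq_bigr => j _.
rewrite !hA !hB !expr1n !mul1r !mulr1.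
have hj : (j <= m)%N by rewrite -ltnS.
rewrite (_ : (m.+1 - (m - j) = j.+1)%N); last by lia.
rewrite (_ : (m.+1 - (m.+1 - j) = j)%N); last by lia.
have b1 : 'C(m.+1, m - j) = 'C(m.+1, j.+1).
  by rewrite -[RHS]bin_sub // subSS.
rewrite b1 bin_sub; last by lia.
set u := (-t) ^+ j.
have e1 : t ^+ (2 * j) = u * u.
  by rewrite /u -exprMn mulrNN -expr2 -exprM.
have e2 : t ^+ (2 * j).+1 = t * (u * u) by rewrite exprS e1.
rewrite exprS -/u -/t e1 e2 !scaler_nat.
ring.
Qed.

Lemma h2 (R : realFieldType) m :
  let t : {poly R} := 'X in
  let s : {poly R} := t - 1 in
  let A : {poly {poly R}} := 1%:P + (-t)%:P * 'X in
  let B : {poly {poly R}} := (-t)%:P + 1%:P * 'X in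
  let W : {poly {poly R}} := 1%:P + (-1)%:P * 'X in
  let Q := A ^+ m * B ^+ m.+1 in
  Q`_m + Q`_m.+1 = - (s * gsum m s t).
Proof.
move=> t s A B W Q.
have eAB : A * B = (s ^+ 2)%:P * 'X + (-t)%:P * W ^+ 2.
  rewrite /A /B /W /s !(polyCN, polyCB, polyC_exp, polyC1); ring.
have eB : B = - (W + s%:P).
  rewrite /A /B /W /s !(polyCN, polyCB, polyC_exp, polyC1); ring.
have eQ : Q = \sum_(k < m.+1) ('X^(m - k) * (((s ^+ 2) ^+ (m - k) * (-t) ^+ k)%:P *
      - (W ^+ (2 * k).+1 + s%:P * W ^+ (2 * k)))) *+ 'C(m, k).
  rewrite /Q exprSr mulrA -exprMn eAB exprDn mulr_suml; apply: eq_bigr => k _.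
  rewrite mulrnAl; congr (_ *+ _).
  rewrite [((s ^+ 2)%:P * _) ^+ _]exprMn [((- t)%:P * _) ^+ _]exprMn -!polyC_exp -(exprM W) polyCM (exprS W) eB; ring.
rewrite eQ !coef_sum -big_split /gsum mulr_sumr -sumrN; apply: eq_bigr => k _.
have hk : (k <= m)%N by rewrite -ltnS.
rewrite !coefMn !coefXnM.
rewrite ltnNge leq_subr /= ltnNge (leq_trans (leq_subr k m) (leqnSn m)) /=.
rewrite subKn // (_ : (m.+1 - (m - k) = k.+1)%N); last by lia.
have hW N l : (W ^+ N)`_l = (-1) ^+ l *+ 'C(N, l) by rewrite coef_lin_exp expr1n mul1r.
rewrite !coefCM !coefN !coefD !coefCM !hW.
have bb : 'C((2*k).+1, k.+1) = 'C((2*k).+1, k).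
  by rewrite -bin_sub; [congr 'C(_,_); lia | lia].
rewrite bb [(-1) ^+ k.+1]exprS /catR -mul2n.
have hk2 : (-t) ^+ k * (-1) ^+ k = t ^+ k by rewrite -exprMn mulrN1 opprK.
rewrite -hk2 -mul_polyC !(polyCM, polyCB, polyC_natr).
ring.
Qed.

Lemma key (R : realFieldType) m : fpoly R m.+1 = ('X - 1) * gsum m ('X - 1) 'X.
Proof.
have e1 := h1 R m; have e2 := h2 R m; simpl in e1, e2.
by apply: oppr_inj; rewrite -e1 e2.
Qed.

Theorem mainTheorem6 (R : realFieldType) (n : nat) :
  forall (i : nat) (t : R), (i < 2 * n)%N -> 1 <= t ->
    0 <= ((fpoly R n)^`(i)).[t].
Proof.
move=> i t hi ht.
case: n hi => [|m] hi; first by rewrite muln0 in hi.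
pose q : {poly R} := 'X * gsum m 'X ('X + 1).
have hq : fpoly R m.+1 = q \Po ('X - 1).
  rewrite key /q comp_polyM comp_polyX /gsum linear_sum /=; congr (_ * _).
  apply: eq_bigr => k _; rewrite comp_polyZ comp_polyM !rmorphXn /= comp_polyD.
  by rewrite comp_polyX comp_polyC subrK.
have nq : nnc q.
  apply: nnc_mul; first exact: nnc_X.
  apply: nnc_sum => k; apply: nnc_scale.
    by rewrite mulr_ge0 ?ler0n ?catR_ge0.
  apply: nnc_mul; apply: nnc_exp; first (apply: nnc_exp; exact: nnc_X).
  by apply: nnc_add; [exact: nnc_X | exact: nnc_1].
rewrite hq derivn_compXsub1 horner_comp !hornerE.
by apply: nnc_horner; [rewrite subr_ge0 | apply: nnc_derivn].
Qed.
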